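(* Let $w=a_1\cdots a_n$ be a word over $\{a,b\}$ with $a_1\neq a_n$. If deleting some $k$ letters from $w$ yields an antipalindrome, then one can obtain an antipalindrome by deleting some $l\le k$ letters from $w$ in such a way that the letters $a_1$ and $a_n$ are not deleted.
   Context: A word is a finite word over the two-letter alphabet $\{a,b\}$. A word $w=a_1\cdots a_n$ is an antipalindrome if $a_i\neq a_{n-i+1}$ for all $i\le n$. *)

(* Defs.v *)
From mathcomp Require Import all_boot.
Set Implicit Arguments. Unset Strict Implicit. Unset Printing Implicit Defensive.

(* Words over {a,b} are encoded as seq bool (a = true, b = false). *)
Definition word := seq bool.

Definition antipalindrome (w : word) : Prop :=
  forall i, i < size w -> nth false w i != nth false w (size w - 1 - i).

(* Deleting letters from w: a mask m of the same length as w; position i is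
   kept iff m_i = true.  The resulting word is mask m w, and the number of
   deleted letters is the number of false entries of m. *)
Definition ndeleted (m : bitseq) : nat := count negb m.

(* Main.v *)
Require Import Defs.
From mathcomp Require Import all_boot zify.

Lemma antiP s : antipalindrome s <-> s = map negb (rev s).
Proof.
split.
- move=> H; apply: (@eq_from_nth _ false); first by rewrite size_map size_rev.
  move=> i Hi; rewrite (nth_map false) ?size_rev // nth_rev //.
  have := H i Hi; have -> : size s - 1 - i = size s - i.+1 by lia.
  by case: (nth false s i); case: (nth false s _).
- move=> E i Hi; rewrite {1}E (nth_map false) ?size_rev // nth_rev //.
  have -> : size s - 1 - i = size s - i.+1 by lia.
  by case: (nth false s _).
Qed.

Lemma nth_last x (s : word) y : nth false (x :: rcons s y) (size (x :: rcons s y) - 1) = y.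
Proof. by rewrite /= size_rcons subn1 /= nth_rcons ltnn eqxx. Qed.

Lemma first_true (m : bitseq) : has id m -> exists t m1, m = nseq t false ++ true :: m1.
Proof.
elim: m => [|b m IH] //=; case: b => /=.
- by move=> _; exists 0, m.
- by move=> /IH [t [m1 ->]]; exists t.+1, m1.
Qed.

Lemma last_true (m : bitseq) : has id m -> exists t m1, m = m1 ++ true :: nseq t false.
Proof.
rewrite -has_rev => /first_true [t [m1 E]]; exists t, (rev m1).
by rewrite -(revK m) E rev_cat rev_cons rev_nseq -cats1 -catA.
Qed.

Lemma split_at (T : Type) (m1 m2 : bitseq) (s : seq T) : size (m1 ++ m2) = size s ->
  exists s1 s2, [/\ s = s1 ++ s2, size s1 = size m1 & size s2 = size m2].
Proof.
move=> H; exists (take (size m1) s), (drop (size m1) s); rewrite cat_take_drop size_drop.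
rewrite size_takel -H size_cat; last by rewrite leq_addr.
split=> //; lia.
Qed.

Lemma mask_nonempty (T : Type) (m : bitseq) (s : seq T) : 0 < size (mask m s) -> has id m.
Proof. by elim: m s => [|b m IH] [|z s] //=; case: b => //= /IH. Qed.

Lemma finish x y (w' : word) (m'' : bitseq) k : size m'' = size w' ->
  antipalindrome (x :: mask m'' w' ++ [:: y]) -> count negb m'' <= k ->
 exists m, [/\ size m = size (x :: rcons w' y), ndeleted m <= k,
   antipalindrome (mask m (x :: rcons w' y)), nth false m 0 &
   nth false m (size (x :: rcons w' y) - 1)].
Proof.
move=> Hs Ha Hk; exists (true :: rcons m'' true); split.
- by rewrite /= !size_rcons Hs.
- rewrite /ndeleted /= -cats1 count_cat /= addn0 addn0 add0n //.
- by rewrite mask_cons mask_rcons.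
- by [].
- by rewrite /= !size_rcons subn1 /= nth_rcons Hs ltnn eqxx.
Qed.

Theorem lemma3 (w : word) (k : nat) :
  0 < size w ->
  nth false w 0 != nth false w (size w - 1) ->
  (exists m : bitseq, size m = size w /\ ndeleted m = k /\
     antipalindrome (mask m w)) ->
  exists m : bitseq, [/\ size m = size w, ndeleted m <= k,
     antipalindrome (mask m w),
     nth false m 0 & nth false m (size w - 1)].
Proof.
move=> Hpos Hne [m [Hsz [Hk Ha]]].
case: w Hpos Hne Hsz Ha => // x w0 _.
case/lastP: w0 => [|w' y]; first by rewrite /= eqxx.
rewrite nth_last /= => Hne.
case: m Hk => [|b1 m0] //; case/lastP: m0 => [|m' b2] Hk; first by rewrite /= size_rcons.
move=> Hsz; have Hs : size m' = size w' by move: Hsz; rewrite /= !size_rcons => [[]].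
rewrite mask_cons mask_rcons // => Ha.
move: Hk; rewrite /ndeleted /= -cats1 count_cat /= addn0 => Hk.
clear Hsz; case: b1 b2 Ha Hk => [] [] /= Ha Hk.
- by apply: (finish x y w' m' k) => //; lia.
- move: Ha; rewrite cats0 => Ha.
  have Hne0 : 0 < size (mask m' w').
  { case E0: (mask m' w') Ha => [|u0 u] // Ha0. by have := Ha0 0 isT; rewrite /= eqxx. }
  case/last_true: (@mask_nonempty _ m' w' Hne0) => t [m1 Em].
  have Hsz2 : size (m1 ++ true :: nseq t false) = size w' by rewrite -Em.
  have [s1 [s2 [Ew Hs1 Hs2]]] := @split_at _ m1 (true :: nseq t false) w' Hsz2.
  case: s2 Ew Hs2 => [|z s3] // Ew [Hs3].
  subst m' w'.
  rewrite mask_cat // mask_cons mask_false /= in Ha.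
  have Hyz : y = z.
  { move/antiP: Ha; rewrite rev_cons rev_cat /= => -[Exz _].
    by move: Hne; rewrite Exz; case: (y); case: (z). }
  subst z; clear Hne0 Hsz2.
  apply: (finish x y (s1 ++ y :: s3) (m1 ++ false :: nseq t false) k).
  + by rewrite !size_cat /= Hs1 Hs3 size_nseq.
  + by rewrite mask_cat // mask_cons mask_false /= cats0.
  + move: Hk; rewrite !count_cat /= count_nseq /=; lia.
- have Hne0 : 0 < size (mask m' w').
  { case E0: (mask m' w') Ha => [|u0 u] // Ha0. by have := Ha0 0 isT; rewrite /= eqxx. }
  case/first_true: (@mask_nonempty _ m' w' Hne0) => t [m1 Em].
  have Hsz2 : size (nseq t false ++ true :: m1) = size w' by rewrite -Em.
  have [s1 [s2 [Ew Hs1 Hs2]]] := @split_at _ (nseq t false) (true :: m1) w' Hsz2.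
  case: s2 Ew Hs2 => [|z s3] // Ew [Hs3].
  subst m' w'.
  rewrite mask_cat ?Hs1 // mask_cons mask_false /= in Ha.
  have Hxz : z = x.
  { move/antiP: Ha; rewrite rev_cons rev_cat /= => -[Exz _].
    by move: Hne; rewrite Exz; case: (x); case: (y). }
  subst z; clear Hne0 Hsz2.
  apply: (finish x y (s1 ++ x :: s3) (nseq t false ++ false :: m1) k).
  + by rewrite !size_cat /= Hs1 Hs3 size_nseq.
  + by rewrite mask_cat ?Hs1 // mask_cons mask_false /=.
  + move: Hk; rewrite !count_cat /= count_nseq /=; lia.
- apply: (finish x y w' m' k) => //; last by lia.
  move/antiP: Ha; rewrite cats0 => E; apply/antiP.
  rewrite rev_cons rev_cat /= map_rcons -E.
  by rewrite -cats1; case: x y Hne => [] [].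
Qed.
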